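(* In the Setting below, $U$ is a commutative associative subalgebra of $\Gamma(\mathcal M)$ (under composition), and the linear map $L\otimes_{\mathbb F}U\to N_{\mathcal M}$, $a\otimes\alpha\mapsto a\alpha$, is an isomorphism of algebras, where $L\otimes_{\mathbb F}U$ carries the product $(a\otimes\alpha)(b\otimes\beta)=ab\otimes\alpha\beta$. In particular $N_{\mathcal M}\cong L\otimes_{\mathbb F}U\cong\mathfrak{sl}_2(U)$.
   Context: Setting. Let $\mathbb F$ be a field of characteristic different from $2$ and $3$. A Malcev algebra is an anticommutative algebra $\mathcal M$ over $\mathbb F$ satisfying $(xz)(yt)=((xy)z)t+((yz)t)x+((zt)x)y+((tx)y)z$. Products are left-normed: $xyz=(xy)z$, $xyzt=((xy)z)t$. Put $J(x,y,z)=xyz+yzx+zxy$ (the Jacobian), $\{x,y,z\}=xyz-xzy+2x(yz)$, and $h(y,z,t,x,u)=\{yz,t,u\}x+\{yz,t,x\}u+\{yx,z,u\}t+\{yu,z,x\}t$. The variety $\mathcal H$ consists of the Malcev algebras satisfying $h(y,z,t,x,u)=0$ identically. The centroid $\Gamma(\mathcal M)$ is the set of linear maps $\alpha$ of $\mathcal M$ (written on the right) with $(xy)\alpha=x(y\alpha)=(x\alpha)y$ for all $x,y$. Put $p(x,y,z,t)=-\{zt,x,y\}-\{yt,z,x\}+\{xt,y,z\}$ and define the operator $\alpha(y,z,t)$ by $x\,\alpha(y,z,t)=p(x,y,z,t)$; for $\mathcal M\in\mathcal H$ these operators lie in $\Gamma(\mathcal M)$. Let $L=\mathfrak{sl}_2(\mathbb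 F)$ with basis $E,H,F$ and products $EH=E$, $FH=-F$, $EF=\tfrac12 H$. Standing assumption: $\mathcal M\in\mathcal H$ contains $L$ as a subalgebra and $mL\neq 0$ for every $0\neq m\in\mathcal M$. Define $N_{\mathcal M}=\{m\in\mathcal M: J(m,a,b)=0\ \forall a,b\in L\}$ and $J_{\mathcal M}=\{m\in\mathcal M:\{m,a,b\}=0\ \forall a,b\in L\}$. Known facts (from prior work): $\mathcal M=N_{\mathcal M}\oplus J_{\mathcal M}$; $J_{\mathcal M}$ is a direct sum of $L$-submodules $V_{2i}$, each with a basis $\{u_i,v_i\}$ satisfying $u_iH=u_i$, $v_iH=-v_i$, $u_iE=v_i$, $u_iF=0$, $v_iE=0$, $v_iF=-u_i$; and, letting $U$ be the linear span of the operators $\alpha(m,a,b)$ ($m\in\mathcal M$, $a,b\in L$), $U\subseteq\Gamma(\mathcal M)$ and $N_{\mathcal M}=\sum_{\alpha\in U}L\alpha$. *)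

(* Defs.v *)
From HB Require Import structures.
From mathcomp Require Import all_boot all_order all_algebra.
Set Implicit Arguments. Unset Strict Implicit. Unset Printing Implicit Defensive.
From Stdlib Require List.
Import GRing.Theory.
Local Open Scope ring_scope.

(* Operators (e.g. elements of the centroid) are written on the right in the
   paper: "x alpha" is here "alpha x", and "alpha beta" (first alpha, then
   beta) is the function  fun x => beta (alpha x). *)
Section MalcevDefs.
Variables (F : fieldType) (M : lmodType F) (mul : M -> M -> M).

Definition bilinear_prod : Prop :=
  (forall (c : F) x y z, mul (c *: x + y) z = c *: mul x z + mul y z) /\
  (forall (c : F) x y z, mul x (c *: y + z) = c *: mul x y + mul x z).

Definition anticommutative : Prop := forall x, mul x x = 0.

Definition malcev_identity : Prop :=
  forall x y z t, mul (mul x z) (mul y t) =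
    mul (mul (mul x y) z) t + mul (mul (mul y z) t) x
    + mul (mul (mul z t) x) y + mul (mul (mul t x) y) z.

Definition malcev_algebra : Prop :=
  [/\ bilinear_prod, anticommutative & malcev_identity].

Definition jac x y z : M :=
  mul (mul x y) z + mul (mul y z) x + mul (mul z x) y.

Definition brace x y z : M :=
  mul (mul x y) z - mul (mul x z) y + 2%:R *: mul x (mul y z).

Definition hpoly y z t x u : M :=
  mul (brace (mul y z) t u) x + mul (brace (mul y z) t x) u
  + mul (brace (mul y x) z u) t + mul (brace (mul y u) z x) t.

Definition in_variety_H : Prop :=
  malcev_algebra /\ forall y z t x u, hpoly y z t x u = 0.

Definition in_centroid (f : M -> M) : Prop :=
  (forall (c : F) x y, f (c *: x + y) = c *: f x + f y) /\
  (forall x y, f (mul x y) = mul x (f y) /\ f (mul x y) = mul (f x) y).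

Definition pfun x y z t : M :=
  - brace (mul z t) x y - brace (mul y t) z x + brace (mul x t) y z.

Definition alpha_op y z t : M -> M := fun x => pfun x y z t.

Variables (E H Fe : M).

Definition inL (a : M) : Prop :=
  exists c1 c2 c3 : F, a = c1 *: E + c2 *: H + c3 *: Fe.

Definition sl2_subalgebra : Prop :=
  [/\ (forall c1 c2 c3 : F, c1 *: E + c2 *: H + c3 *: Fe = 0 ->
          [/\ c1 = 0, c2 = 0 & c3 = 0]),
      mul E H = E, mul Fe H = - Fe & mul E Fe = (2%:R : F)^-1 *: H].

Definition faithful_L : Prop :=
  forall m, m != 0 -> exists a, inL a /\ mul m a != 0.

Definition inN (m : M) : Prop := forall a b, inL a -> inL b -> jac m a b = 0.
Definition inJ (m : M) : Prop := forall a b, inL a -> inL b -> brace m a b = 0.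

Definition inU (f : M -> M) : Prop :=
  exists s : seq (F * M * M * M),
    (forall e, e \in s -> inL e.1.2 /\ inL e.2) /\
    forall x, f x = \sum_(e <- s) e.1.1.1 *: alpha_op e.1.1.2 e.1.2 e.2 x.

Definition fact_decomp : Prop :=
  (forall m, exists n j, [/\ inN n, inJ j & m = n + j]) /\
  (forall m, inN m -> inJ m -> m = 0).

(* J_M = direct sum of the modules V_{2i} = span{u_i, v_i} *)
Definition fact_J_structure : Prop :=
  exists (I : eqType) (u v : I -> M),
    [/\ (forall i, [/\ mul (u i) H = u i, mul (v i) H = - v i,
                      mul (u i) E = v i & mul (u i) Fe = 0] /\
                   mul (v i) E = 0 /\ mul (v i) Fe = - u i),
        (forall i, inJ (u i) /\ inJ (v i)),
        (forall j, inJ j -> exists s : seq (I * F * F),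
            j = \sum_(e <- s) (e.1.2 *: u e.1.1 + e.2 *: v e.1.1)) &
        (forall s : seq (I * F * F), uniq (map (fun e => e.1.1) s) ->
            \sum_(e <- s) (e.1.2 *: u e.1.1 + e.2 *: v e.1.1) = 0 ->
            forall e, e \in s -> e.1.2 = 0 /\ e.2 = 0)].

Definition fact_U_centroid : Prop := forall f, inU f -> in_centroid f.

Definition fact_N_span : Prop :=
  forall n, inN n <-> exists s : list (M * (M -> M)),
    List.Forall (fun e => inL e.1 /\ inU e.2) s /\
    n = \sum_(e <- s) e.2 e.1.

End MalcevDefs.

(* Main.v *)
Require Import Defs.
From HB Require Import structures.
From mathcomp Require Import all_boot all_order all_algebra.
Import GRing.Theory.
Local Open Scope ring_scope.

Lemma pDl {F : fieldType} {M : lmodType F} {mul : M -> M -> M} :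
  bilinear_prod mul -> forall x y z, mul (x + y) z = mul x z + mul y z.
Proof. by move=> [h1 _] x y z; have := h1 1 x y z; rewrite !scale1r. Qed.
Lemma pDr {F : fieldType} {M : lmodType F} {mul : M -> M -> M} :
  bilinear_prod mul -> forall x y z, mul x (y + z) = mul x y + mul x z.
Proof. by move=> [_ h1] x y z; have := h1 1 x y z; rewrite !scale1r. Qed.
Lemma p0l {F : fieldType} {M : lmodType F} {mul : M -> M -> M} :
  bilinear_prod mul -> forall z, mul 0 z = 0.
Proof.
move=> b z; have h := pDl b 0 0 z; rewrite addr0 in h.
by apply: (addIr (mul 0 z)); rewrite add0r -h.
Qed.
Lemma p0r {F : fieldType} {M : lmodType F} {mul : M -> M -> M} :
  bilinear_prod mul -> forall z, mul z 0 = 0.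
Proof.
move=> b z; have h := pDr b z 0 0; rewrite addr0 in h.
by apply: (addIr (mul z 0)); rewrite add0r -h.
Qed.
Lemma pZl {F : fieldType} {M : lmodType F} {mul : M -> M -> M} :
  bilinear_prod mul -> forall c x z, mul (c *: x) z = c *: mul x z.
Proof. move=> b c x z; have := b.1 c x 0 z; by rewrite !addr0 p0l ?addr0. Qed.
Lemma pNl {F : fieldType} {M : lmodType F} {mul : M -> M -> M} :
  bilinear_prod mul -> forall x z, mul (- x) z = - mul x z.
Proof. by move=> b x z; rewrite -scaleN1r pZl // scaleN1r. Qed.
Lemma pBl {F : fieldType} {M : lmodType F} {mul : M -> M -> M} :
  bilinear_prod mul -> forall x y z, mul (x - y) z = mul x z - mul y z.
Proof. by move=> b x y z; rewrite pDl // pNl. Qed.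

Lemma cD {F : fieldType} {M : lmodType F} {mul : M -> M -> M} {g} :
  in_centroid mul g -> forall x y, g (x + y) = g x + g y.
Proof. by move=> [h _] x y; have := h 1 x y; rewrite !scale1r. Qed.
Lemma c0 {F : fieldType} {M : lmodType F} {mul : M -> M -> M} {g} :
  in_centroid mul g -> g 0 = 0.
Proof.
move=> c; have h := cD c 0 0; rewrite addr0 in h.
by apply: (addIr (g 0)); rewrite add0r -h.
Qed.
Lemma cZ {F : fieldType} {M : lmodType F} {mul : M -> M -> M} {g} :
  in_centroid mul g -> forall a x, g (a *: x) = a *: g x.
Proof. by move=> c a x; have := c.1 a x 0; rewrite !addr0 (c0 c) addr0. Qed.
Lemma cN {F : fieldType} {M : lmodType F} {mul : M -> M -> M} {g} :
  in_centroid mul g -> forall x, g (- x) = - g x.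
Proof. by move=> c x; rewrite -scaleN1r (cZ c) scaleN1r. Qed.
Lemma cB {F : fieldType} {M : lmodType F} {mul : M -> M -> M} {g} :
  in_centroid mul g -> forall x y, g (x - y) = g x - g y.
Proof. by move=> c x y; rewrite (cD c) (cN c). Qed.
Lemma cMr {F : fieldType} {M : lmodType F} {mul : M -> M -> M} {g} :
  in_centroid mul g -> forall x y, g (mul x y) = mul x (g y).
Proof. by move=> c x y; case: (c.2 x y). Qed.
Lemma cMl {F : fieldType} {M : lmodType F} {mul : M -> M -> M} {g} :
  in_centroid mul g -> forall x y, g (mul x y) = mul (g x) y.
Proof. by move=> c x y; case: (c.2 x y). Qed.

Lemma cbr3 {F : fieldType} {M : lmodType F} {mul : M -> M -> M} {g} :
  in_centroid mul g -> forall u v w, g (brace mul u v w) = brace mul u v (g w).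
Proof.
move=> c u v w; rewrite /brace !(cD c, cN c, cZ c).
by rewrite (cMr c (mul u v)) (cMl c (mul u w)) (cMr c u) (cMr c u) (cMr c v).
Qed.
Lemma cbr2 {F : fieldType} {M : lmodType F} {mul : M -> M -> M} {g} :
  in_centroid mul g -> forall u v w, g (brace mul u v w) = brace mul u (g v) w.
Proof.
move=> c u v w; rewrite /brace !(cD c, cN c, cZ c).
by rewrite (cMl c (mul u v)) (cMr c u v) (cMr c (mul u w)) (cMr c u) (cMl c v).
Qed.
Lemma cbr1 {F : fieldType} {M : lmodType F} {mul : M -> M -> M} {g} :
  in_centroid mul g -> forall u v w, g (brace mul u v w) = brace mul (g u) v w.
Proof.
move=> c u v w; rewrite /brace !(cD c, cN c, cZ c).
by rewrite (cMl c (mul u v)) (cMl c u v) (cMl c (mul u w)) (cMl c u w) (cMl c u).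
Qed.
Lemma c_pfun {F : fieldType} {M : lmodType F} {mul : M -> M -> M} {g} :
  in_centroid mul g -> forall x y z t, g (pfun mul x y z t) = pfun mul x (g y) z t.
Proof.
move=> c x y z t; rewrite /pfun.
rewrite (cD c (- brace mul (mul z t) x y - brace mul (mul y t) z x)).
rewrite (cB c (- brace mul (mul z t) x y)) (cN c (brace mul (mul z t) x y)).
by rewrite (cbr3 c) (cbr1 c) (cMl c y) (cbr2 c).
Qed.

Lemma c_sum {F : fieldType} {M : lmodType F} {mul : M -> M -> M} {g} {T : Type} :
  in_centroid mul g -> forall (s : seq T) (P : T -> M),
  g (\sum_(e <- s) P e) = \sum_(e <- s) g (P e).
Proof.
move=> c; elim=> [|e s IH] P; first by rewrite !big_nil (c0 c).
by rewrite !big_cons (cD c) IH.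
Qed.

Lemma inU0 {F : fieldType} {M : lmodType F} {mul : M -> M -> M} E H Fe :
  inU mul E H Fe (fun _ => 0).
Proof. by exists [::]; split=> [e|x]; rewrite ?in_nil ?big_nil. Qed.

Lemma inU_add {F : fieldType} {M : lmodType F} {mul : M -> M -> M} E H Fe f g :
  inU mul E H Fe f -> inU mul E H Fe g -> inU mul E H Fe (fun x => f x + g x).
Proof.
move=> [s1 [h1 e1]] [s2 [h2 e2]]; exists (s1 ++ s2); split.
  by move=> e; rewrite mem_cat => /orP[/h1|/h2].
by move=> x; rewrite big_cat e1 e2.
Qed.

Lemma inU_scale {F : fieldType} {M : lmodType F} {mul : M -> M -> M} E H Fe (c : F) f :
  inU mul E H Fe f -> inU mul E H Fe (fun x => c *: f x).
Proof.
move=> [s [h e]]; exists (map (fun e => (c * e.1.1.1, e.1.1.2, e.1.2, e.2)) s); split.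
  by move=> e' /mapP[e0 /h he ->].
by move=> x; rewrite big_map e scaler_sumr; apply: eq_bigr => i _; rewrite scalerA.
Qed.

Lemma inU_comp {F : fieldType} {M : lmodType F} {mul : M -> M -> M} E H Fe f g :
  in_centroid mul g -> inU mul E H Fe f -> inU mul E H Fe (fun x => g (f x)).
Proof.
move=> hg [s [h e]]; exists (map (fun e => (e.1.1.1, g e.1.1.2, e.1.2, e.2)) s); split.
  by move=> e' /mapP[e0 /h he ->].
move=> x; rewrite big_map e (c_sum hg); apply: eq_bigr => i _.
by rewrite (cZ hg) /alpha_op (c_pfun hg).
Qed.

Lemma add3 (V : zmodType) (a b c d e f : V) :
  a + b + c + (d + e + f) = (a + d) + (b + e) + (c + f).
Proof. by rewrite addrACA (addrACA a b d e). Qed.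

Lemma scale_inj0 {F : fieldType} {M : lmodType F} (c : F) (v : M) :
  c != 0 -> c *: v = 0 -> v = 0.
Proof. by move=> hc h; rewrite -[v]scale1r -(mulVf hc) -scalerA h scaler0. Qed.

Lemma ccomm {F : fieldType} {M : lmodType F} {mul : M -> M -> M} E H Fe f g :
  bilinear_prod mul -> faithful_L mul E H Fe ->
  in_centroid mul f -> in_centroid mul g -> forall x, g (f x) = f (g x).
Proof.
move=> b Hf hf hg x; apply/eqP; rewrite -subr_eq0; apply/negPn/negP => hd.
have [a [La hm]] := Hf _ hd.
have e1 : mul (g (f x)) a = mul (g x) (f a)
  by rewrite -(cMl hg) -(cMl hf) (cMr hf) (cMl hg).
have e2 : mul (f (g x)) a = mul (g x) (f a) by rewrite -(cMl hf) (cMr hf).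
by rewrite (pBl b) e1 e2 subrr eqxx in hm.
Qed.

Lemma ckill {F : fieldType} {M : lmodType F} {mul : M -> M -> M} E H Fe h :
  bilinear_prod mul -> faithful_L mul E H Fe -> in_centroid mul h ->
  h E = 0 -> h H = 0 -> h Fe = 0 -> forall x, h x = 0.
Proof.
move=> b Hf hh h1 h2 h3.
have hL : forall a, inL E H Fe a -> h a = 0.
  move=> a [c1 [c2 [c3 ->]]].
  by rewrite !(cD hh) !(cZ hh) h1 h2 h3 !scaler0 !addr0.
move=> x; apply/eqP/negPn/negP => hx; have [a [La hm]] := Hf _ hx.
by rewrite -(cMl hh) (cMr hh) (hL a La) (p0r b) eqxx in hm.
Qed.

Theorem propositionc1 (F : fieldType) (M : lmodType F) (mul : M -> M -> M)
    (E H Fe : M)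
    (char2 : 2%:R != 0 :> F) (char3 : 3%:R != 0 :> F)
    (HM : in_variety_H mul)
    (HL : sl2_subalgebra mul E H Fe)
    (Hfaith : faithful_L mul E H Fe)
    (K1 : fact_decomp mul E H Fe)
    (K2 : fact_J_structure mul E H Fe)
    (K3 : fact_U_centroid mul E H Fe)
    (K4 : fact_N_span mul E H Fe) :
  (* U is a commutative associative subalgebra of Gamma(M) under composition *)
  [/\ (forall f, inU mul E H Fe f -> in_centroid mul f),
      (forall f g, inU mul E H Fe f -> inU mul E H Fe g ->
          inU mul E H Fe (fun x => g (f x))) &
      (forall f g, inU mul E H Fe f -> inU mul E H Fe g ->
          forall x, g (f x) = f (g x))] /\
  (* L (x) U -> N_M, a (x) alpha |-> a alpha, is a bijection
     (L (x) U identified with U^3 via the basis E, H, F of L) ... *)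
  [/\ (forall n, inN mul E H Fe n <->
          exists f g k, [/\ inU mul E H Fe f, inU mul E H Fe g, inU mul E H Fe k
                          & n = f E + g H + k Fe]),
      (forall f g k, inU mul E H Fe f -> inU mul E H Fe g -> inU mul E H Fe k ->
          f E + g H + k Fe = 0 ->
          forall x, [/\ f x = 0, g x = 0 & k x = 0]) &
  (* ... and an algebra homomorphism: (a alpha)(b beta) = (ab)(alpha beta) *)
      (forall a b f g, inL E H Fe a -> inL E H Fe b ->
          inU mul E H Fe f -> inU mul E H Fe g ->
          mul (f a) (g b) = g (f (mul a b)))].
Proof.
have [[b anti _] _] := HM.
have [indep EH FeH EFe] := HL.
split; first split.
- exact: K3.
- by move=> f g hf hg; apply: inU_comp => //; apply: K3.
- by move=> f g hf hg; apply: (@ccomm _ _ _ E H Fe f g b Hfaith); apply: K3.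
split.
- move=> n; split.
    move=> /K4 [s [Hs en]]; subst n; elim: s Hs => [|[a h] s IH] Hs.
      exists (fun _ => 0), (fun _ => 0), (fun _ => 0).
      by split; rewrite ?big_nil ?addr0 //; apply: inU0.
    have /List.Forall_cons_iff [[/= La Uh] Hs'] := Hs.
    have [f [g [k [Uf Ug Uk es]]]] := IH Hs'.
    have hh := K3 _ Uh.
    have [c1 [c2 [c3 Ea]]] := La.
    exists (fun x => c1 *: h x + f x), (fun x => c2 *: h x + g x),
      (fun x => c3 *: h x + k x).
    split; try by apply: inU_add => //; apply: inU_scale.
    by rewrite big_cons /= es Ea !(cD hh) !(cZ hh) add3.
  move=> [f [g [k [Uf Ug Uk ->]]]]; apply/K4.
  exists [:: (E, f); (H, g); (Fe, k)]; split.
    have hE : inL E H Fe E by exists 1, 0, 0; rewrite scale1r !scale0r !addr0.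
    have hH : inL E H Fe H by exists 0, 1, 0; rewrite scale1r !scale0r add0r addr0.
    have hF : inL E H Fe Fe by exists 0, 0, 1; rewrite scale1r !scale0r !add0r.
    by repeat constructor.
  by rewrite !big_cons big_nil /= addr0 !addrA.
- move=> f g k Uf Ug Uk S.
  have hf := K3 _ Uf; have hg := K3 _ Ug; have hk := K3 _ Uk.
  have HH : mul H H = 0 by apply: anti.
  have m1 : f E - k Fe = 0.
    have := congr1 (fun v => mul v H) S; rewrite /= (p0l b) !(pDl b).
    by rewrite -(cMl hf) -(cMl hg) -(cMl hk) EH HH FeH (c0 hg) addr0 (cN hk).
  have m2 : f E + k Fe = 0.
    have := congr1 (fun v => mul v H) m1; rewrite /= (p0l b) (pBl b).
    by rewrite -(cMl hf) -(cMl hk) EH FeH (cN hk) opprK.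
  have fE0 : f E = 0.
    apply: (@scale_inj0 _ _ 2%:R _ char2); rewrite scaler_nat mulr2n.
    by rewrite {1}(subr0_eq m1) addrC m2.
  have kF0 : k Fe = 0 by move: m2; rewrite fE0 add0r.
  have gH0 : g H = 0 by move: S; rewrite fE0 kF0 add0r addr0.
  have i2 : (2%:R : F)^-1 != 0 by rewrite invr_eq0.
  have fH0 : f H = 0.
    apply: (@scale_inj0 _ _ _ _ i2); rewrite -(cZ hf) -EFe (cMl hf) fE0 (p0l b) //.
  have fF0 : f Fe = 0.
    apply/eqP; rewrite -oppr_eq0 -(cN hf) -FeH (cMr hf) fH0 (p0r b) //.
  have kH0 : k H = 0.
    apply: (@scale_inj0 _ _ _ _ i2); rewrite -(cZ hk) -EFe (cMr hk) kF0 (p0r b) //.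
  have kE0 : k E = 0 by rewrite -EH (cMr hk) kH0 (p0r b).
  have gE0 : g E = 0 by rewrite -EH (cMr hg) gH0 (p0r b).
  have gF0 : g Fe = 0.
    apply/eqP; rewrite -oppr_eq0 -(cN hg) -FeH (cMr hg) gH0 (p0r b) //.
  move=> x; split.
  + exact: (@ckill _ _ _ E H Fe _ b Hfaith hf).
  + exact: (@ckill _ _ _ E H Fe _ b Hfaith hg).
  + exact: (@ckill _ _ _ E H Fe _ b Hfaith hk).
- move=> a c f g La Lc Uf Ug.
  by rewrite (cMl (K3 _ Uf)) (cMr (K3 _ Ug)).
Qed.
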